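(* For a prime $N\ge3$, \[ \frac1{N-1}\sum_{w=1}^{N-1}\frac1N\sum_{h=1}^{N-1}\frac{|\cot(\pi hw/N)|}{h}\le\frac{H_{N-1}(1)}{N}\,\frac6\pi\log(N). \]
   Context: $H_n(1)=\sum_{h=1}^n h^{-1}$ is the $n$-th harmonic number; $\log$ is the natural logarithm. *)

(* Defs.v *)
From Stdlib Require Import Reals Lra Lia Znumtheory.
Open Scope R_scope.

Fixpoint sum1 (n : nat) (f : nat -> R) : R :=
  match n with
  | O => 0
  | S m => sum1 m f + f (S m)
  end.

Definition cot (x : R) : R := cos x / sin x.

Definition harmonic (n : nat) : R := sum1 n (fun h => / INR h).

(* Main.v *)
Require Import Defs.
From Stdlib Require Import Reals Znumtheory.
From Stdlib Require Import Lra Lia List Permutation ZArith.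
Open Scope R_scope.

Lemma sum1_ext n f g : (forall k, (1 <= k <= n)%nat -> f k = g k) -> sum1 n f = sum1 n g.
Proof. induction n; intros H; simpl; auto. rewrite IHn by (intros; apply H; lia). rewrite H by lia. auto. Qed.

Lemma sum1_le n f g : (forall k, (1 <= k <= n)%nat -> f k <= g k) -> sum1 n f <= sum1 n g.
Proof. induction n; intros H; simpl; [lra|]. assert (f (S n) <= g (S n)) by (apply H; lia).
 assert (sum1 n f <= sum1 n g) by (apply IHn; intros; apply H; lia). lra. Qed.

Lemma sum1_scal n c f : sum1 n (fun k => c * f k) = c * sum1 n f.
Proof. induction n; simpl; [ring|]. rewrite IHn. ring. Qed.

Lemma sum1_plus n f g : sum1 n (fun k => f k + g k) = sum1 n f + sum1 n g.
Proof. induction n; simpl; [ring|]. rewrite IHn. ring. Qed.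

Lemma sum1_swap n m F : sum1 n (fun w => sum1 m (fun h => F h w)) = sum1 m (fun h => sum1 n (fun w => F h w)).
Proof. induction n; simpl.
 - induction m; simpl; [auto|]. rewrite <- IHm. ring.
 - rewrite IHn. rewrite <- sum1_plus. auto. Qed.

Definition lsum (f : nat -> R) (l : list nat) := fold_right (fun k acc => f k + acc) 0 l.

Lemma lsum_app f l1 l2 : lsum f (l1 ++ l2) = lsum f l1 + lsum f l2.
Proof. induction l1; simpl; [ring|]. rewrite IHl1. ring. Qed.

Lemma lsum_perm f l1 l2 : Permutation l1 l2 -> lsum f l1 = lsum f l2.
Proof. induction 1; simpl in *; lra. Qed.

Lemma lsum_map f g l : lsum f (map g l) = lsum (fun k => f (g k)) l.
Proof. induction l; simpl; auto. rewrite IHl; auto. Qed.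

Lemma sum1_lsum n f : sum1 n f = lsum f (seq 1 n).
Proof. induction n; [simpl; auto|]. rewrite seq_S, lsum_app, <- IHn. simpl.
 replace (1 + n)%nat with (S n) by lia. ring. Qed.

Lemma sum1_perm n (g : nat -> nat) f :
  (forall k, (1 <= k <= n)%nat -> (1 <= g k <= n)%nat) ->
  (forall a b, (1 <= a <= n)%nat -> (1 <= b <= n)%nat -> g a = g b -> a = b) ->
  sum1 n (fun k => f (g k)) = sum1 n f.
Proof. intros Hr Hi. rewrite !sum1_lsum, <- lsum_map. apply lsum_perm.
 apply NoDup_Permutation_bis.
 - apply NoDup_map_NoDup_ForallPairs; [|apply seq_NoDup].
   intros a b Ha Hb. apply in_seq in Ha; apply in_seq in Hb. apply Hi; lia.
 - rewrite length_map. lia.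
 - intros x Hx. apply in_map_iff in Hx. destruct Hx as [k [<- Hk]].
   apply in_seq in Hk. apply in_seq. specialize (Hr k ltac:(lia)). lia.
Qed.

Lemma sl a : sin_lb a = a - a^3/6 + a^5/120 - a^7/5040.
Proof. unfold sin_lb, sin_approx, sin_term. rewrite !tech5. unfold sum_f_R0.
 cbv [Nat.mul Nat.add]. rewrite !fact_simpl, !mult_INR. change (Factorial.fact 0) with 1%nat. rewrite !S_INR. simpl INR. field. Qed.
Lemma cu a : cos_ub a = 1 - a^2/2 + a^4/24 - a^6/720 + a^8/40320.
Proof. unfold cos_ub, cos_approx, cos_term. rewrite !tech5. unfold sum_f_R0.
 cbv [Nat.mul Nat.add]. rewrite !fact_simpl, !mult_INR. change (Factorial.fact 0) with 1%nat. rewrite !S_INR. simpl INR. field. Qed.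

Lemma ycos_le_sin y : 0 < y -> y <= PI / 2 -> y * cos y <= sin y.
Proof. intros H1 H2. pose proof PI_4. pose proof PI_RGT_0.
 destruct (SIN y) as [Hs _]; try lra. destruct (COS y) as [_ Hc]; try lra.
 rewrite sl in Hs. rewrite cu in Hc.
 assert (y <= 2) by lra.
 assert (y * cos y <= y * (1 - y^2/2 + y^4/24 - y^6/720 + y^8/40320)) by (apply Rmult_le_compat_l; lra).
 assert (0 <= y^3/3 - y^5/30 + y^7/840 - y^9/40320).
 { assert (0 < y^2 <= 4) by (split; nra).
   assert (y^5 = y^3 * y^2) by ring. assert (y^7 = y^3*y^2*y^2) by ring. assert (y^9 = y^3*(y^2*y^2*y^2)) by ring.
   assert (0 < y^3) by (apply pow_lt; lra).
   assert (y^2*y^2*y^2 <= 64) by (assert (y^2*y^2 <= 16) by nra; nra).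
   assert (0 <= 1/3 - y^2/30 - (y^2*y^2*y^2)/40320) by lra.
   assert (0 <= y^3 * (1/3 - y^2/30 - (y^2*y^2*y^2)/40320)) by (apply Rmult_le_pos; lra).
   assert (0 <= y^7) by (apply pow_le; lra). nra. }
 assert (y * (1 - y^2/2 + y^4/24 - y^6/720 + y^8/40320) = y - y^3/2 + y^5/24 - y^7/720 + y^9/40320) by field.
 lra.
Qed.

Lemma cot_le y : 0 < y -> y <= PI / 2 -> 0 <= cot y <= / y.
Proof. intros H1 H2. pose proof PI_RGT_0.
 assert (0 < sin y) by (apply sin_gt_0; lra).
 assert (0 <= cos y) by (apply cos_ge_0; lra).
 pose proof (ycos_le_sin y H1 H2). unfold cot. split.
 - apply Rmult_le_pos; [lra|]. left; apply Rinv_0_lt_compat; lra.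
 - apply (Rmult_le_reg_l (y * sin y)); [nra|]. field_simplify; try lra.
Qed.

Lemma cot_bound x : 0 < x < PI -> Rabs (cot x) <= / x + / (PI - x).
Proof. intros [H1 H2].
 assert (0 < /x) by (apply Rinv_0_lt_compat; lra).
 assert (0 < /(PI - x)) by (apply Rinv_0_lt_compat; lra).
 destruct (Rle_dec x (PI/2)).
 - destruct (cot_le x) as [A B]; try lra. rewrite Rabs_right; lra.
 - destruct (cot_le (PI - x)) as [A B]; try lra.
   assert (cot x = - cot (PI - x)).
   { unfold cot. rewrite sin_PI_x, Rtrigo_facts.cos_pi_minus. unfold Rdiv. ring. }
   rewrite H3, Rabs_Ropp, Rabs_right; lra.
Qed.

Lemma cot_shift x q : cot (x + INR q * PI) = cot x.
Proof. induction q.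
 - simpl. f_equal. ring.
 - rewrite S_INR. replace (x + (INR q + 1) * PI) with ((x + INR q * PI) + PI) by ring.
   unfold cot in *. rewrite neg_sin, neg_cos. unfold Rdiv in *. rewrite Rinv_opp. rewrite <- IHq. ring.
Qed.

Lemma ln_diff a b : 0 < a -> 0 < b -> 1 - a / b <= ln b - ln a.
Proof. intros Ha Hb. pose proof (exp_ineq1_le (ln a - ln b)).
 unfold Rminus in H; rewrite exp_plus, exp_ln, exp_Ropp, exp_ln in H by lra.
 replace (a * / b) with (a / b) in H by (unfold Rdiv; ring). lra. Qed.

Lemma harm_le n : (1 <= n)%nat -> harmonic n <= 1 + ln (INR n).
Proof. induction n; intros H; [lia|]. destruct n.
 - unfold harmonic; simpl. rewrite ln_1. lra.
 - specialize (IHn ltac:(lia)).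
   assert (E : harmonic (S (S n)) = harmonic (S n) + / INR (S (S n))) by reflexivity.
   rewrite E.
   assert (0 < INR (S n)) by (apply lt_0_INR; lia).
   pose proof (ln_diff (INR (S n)) (INR (S (S n))) H0 ltac:(apply lt_0_INR; lia)).
   rewrite (S_INR (S n)) in *. replace (1 - INR (S n) / (INR (S n) + 1)) with (/ (INR (S n) + 1)) in H1 by (field; lra).
   lra.
Qed.

Lemma harm_nonneg n : 0 <= harmonic n.
Proof. induction n; [unfold harmonic; simpl; lra|].
 change (harmonic (S n)) with (harmonic n + / INR (S n)).
 assert (0 < / INR (S n)) by (apply Rinv_0_lt_compat, lt_0_INR; lia). lra. Qed.

Lemma modr_range N h w : prime (Z.of_nat N) -> (1 <= h < N)%nat -> (1 <= w < N)%nat ->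
  (1 <= (h * w) mod N < N)%nat.
Proof. intros Hp Hh Hw. split; [|apply Nat.mod_upper_bound; lia].
 destruct (Nat.eq_dec ((h*w) mod N) 0) as [E|E]; [|lia]. exfalso.
 apply Nat.Div0.mod_divides in E. destruct E as [c Hc].
 assert (Hd : (Z.of_nat N | Z.of_nat h * Z.of_nat w)%Z) by (exists (Z.of_nat c); lia).
 destruct (prime_mult _ Hp _ _ Hd) as [[d Hd']|[d Hd']]; (clear - Hd' Hh Hw; destruct (Z.lt_total d 0) as [?|[?|?]]; subst; nia).
Qed.

Lemma modr_inj N h a b : prime (Z.of_nat N) -> (1 <= h < N)%nat -> (1 <= a < N)%nat -> (1 <= b < N)%nat ->
  ((h * a) mod N = (h * b) mod N)%nat -> a = b.
Proof. intros Hp Hh Ha Hb E.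
 pose proof (Nat.div_mod_eq (h*a) N). pose proof (Nat.div_mod_eq (h*b) N).
 assert (Hd : (Z.of_nat N | Z.of_nat h * (Z.of_nat a - Z.of_nat b))%Z).
 { exists (Z.of_nat ((h*a)/N) - Z.of_nat ((h*b)/N))%Z. nia. }
 destruct (prime_mult _ Hp _ _ Hd) as [[d Hd']|[d Hd']]; (clear - Hd' Hh Ha Hb; destruct (Z.lt_total d 0) as [?|[?|?]]; subst; nia).
Qed.

Lemma inner_bound N h : prime (Z.of_nat N) -> (3 <= N)%nat -> (1 <= h <= N - 1)%nat ->
  sum1 (N - 1) (fun w => Rabs (cot (PI * INR h * INR w / INR N)))
  <= 2 * INR N / PI * harmonic (N - 1).
Proof. intros Hp HN Hh. pose proof PI_RGT_0.
 assert (HNp : 0 < INR N) by (apply lt_0_INR; lia).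
 apply Rle_trans with (sum1 (N - 1) (fun w => INR N / PI * (/ INR ((h*w) mod N) + / INR (N - (h*w) mod N)))).
 - apply sum1_le. intros w Hw.
   pose proof (modr_range N h w Hp ltac:(lia) ltac:(lia)) as Hr.
   pose proof (Nat.div_mod_eq (h*w) N) as Hd.
   set (r := ((h*w) mod N)%nat) in *. set (q := ((h*w)/N)%nat) in *.
   assert (E : INR h * INR w = INR N * INR q + INR r).
   { rewrite <- mult_INR, <- mult_INR, <- plus_INR. f_equal. exact Hd. }
   replace (PI * INR h * INR w / INR N) with (PI * INR r / INR N + INR q * PI)
     by (rewrite Rmult_assoc, E; field; lra).
   rewrite cot_shift.
   assert (Hr1 : 1 <= INR r) by (apply (le_INR 1); lia).
   assert (Hr2 : INR r + 1 <= INR N) by (rewrite <- S_INR; apply le_INR; lia).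
   assert (0 < PI * INR r / INR N < PI).
   { split. apply Rdiv_lt_0_compat; nra.
     apply (Rmult_lt_reg_r (INR N)); [lra|]. unfold Rdiv. rewrite Rmult_assoc, Rinv_l by lra. nra. }
   eapply Rle_trans; [apply cot_bound; auto|].
   rewrite minus_INR by lia.
   right. field. repeat split; nra.
 - rewrite sum1_scal, sum1_plus.
   rewrite (sum1_perm (N-1) (fun w => Nat.modulo (Nat.mul h w) N) (fun k => / INR k)).
   2:{ intros k Hk. pose proof (modr_range N h k Hp ltac:(lia) ltac:(lia)). lia. }
   2:{ intros a b Ha Hb. apply (modr_inj N h); auto; lia. }
   rewrite (sum1_perm (N-1) (fun w => Nat.sub N (Nat.modulo (Nat.mul h w) N)) (fun k => / INR k)).
   2:{ intros k Hk. pose proof (modr_range N h k Hp ltac:(lia) ltac:(lia)). lia. }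
   2:{ intros a b Ha Hb E. apply (modr_inj N h); auto; try lia.
       pose proof (modr_range N h a Hp ltac:(lia) ltac:(lia)).
       pose proof (modr_range N h b Hp ltac:(lia) ltac:(lia)). lia. }
   unfold harmonic. right. field. lra.
Qed.

Theorem lemma4 (N : nat) (hprime : prime (Z.of_nat N)) (hN : (3 <= N)%nat) :
  / INR (N - 1) *
    sum1 (N - 1) (fun w =>
      / INR N * sum1 (N - 1) (fun h =>
        Rabs (cot (PI * INR h * INR w / INR N)) / INR h))
  <= harmonic (N - 1) / INR N * (6 / PI) * ln (INR N).
Proof.
  pose proof PI_RGT_0 as HPI.
  set (A := fun h w => Rabs (cot (PI * INR h * INR w / INR N))).
  change (fun w => / INR N * sum1 (N - 1) (fun h => Rabs (cot (PI * INR h * INR w / INR N)) / INR h))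
    with (fun w => / INR N * sum1 (N - 1) (fun h => A h w / INR h)).
  set (H := harmonic (N - 1)).
  assert (S1 : sum1 (N - 1) (fun w => / INR N * sum1 (N - 1) (fun h => A h w / INR h))
             = / INR N * sum1 (N - 1) (fun h => / INR h * sum1 (N - 1) (fun w => A h w))).
  { rewrite sum1_scal. f_equal. rewrite sum1_swap. apply sum1_ext; intros.
    rewrite <- sum1_scal. apply sum1_ext; intros. unfold Rdiv. ring. }
  assert (S2 : sum1 (N - 1) (fun h => / INR h * sum1 (N - 1) (fun w => A h w))
             <= H * (2 * INR N / PI * H)).
  { apply Rle_trans with (sum1 (N - 1) (fun h => (2 * INR N / PI * H) * / INR h)).
    - apply sum1_le; intros h Hh. rewrite (Rmult_comm (2 * INR N / PI * H)).
      apply Rmult_le_compat_l.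
      + left; apply Rinv_0_lt_compat, lt_0_INR; lia.
      + apply inner_bound; auto.
    - rewrite sum1_scal. unfold H, harmonic. right; ring. }
  rewrite S1.
  set (a := INR N). set (L := ln a).
  assert (Ha : 3 <= a) by (unfold a; replace 3 with (INR 3) by (simpl; ring); apply le_INR; lia).
  assert (Hn : INR (N - 1) = a - 1) by (unfold a; rewrite minus_INR by lia; simpl; ring).
  rewrite Hn.
  assert (HL : 1 <= L).
  { unfold L. rewrite <- (ln_exp 1). pose proof exp_le_3. pose proof (exp_pos 1).
    destruct (Req_dec (exp 1) a) as [E|E]; [rewrite E; lra|].
    left. apply ln_increasing; lra. }
  assert (HH0 : 0 <= H) by apply harm_nonneg.
  assert (HH : H <= 1 + L).
  { apply Rle_trans with (1 + ln (INR (N - 1))). apply harm_le; lia.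
    rewrite Hn. unfold L. apply Rplus_le_compat_l. left. apply ln_increasing; lra. }
  assert (Key : a * H <= 3 * (a - 1) * L) by nra.
  set (X := sum1 (N - 1) (fun h => / INR h * sum1 (N - 1) (fun w => A h w))) in *.
  apply Rle_trans with (/ (a - 1) * (/ a * (H * (2 * a / PI * H)))).
  { apply Rmult_le_compat_l. left; apply Rinv_0_lt_compat; lra.
    apply Rmult_le_compat_l. left; apply Rinv_0_lt_compat; lra. exact S2. }
  apply Rminus_le.
  replace (/ (a - 1) * (/ a * (H * (2 * a / PI * H))) - H / a * (6 / PI) * L)
    with (- (2 * H / (PI * a * (a - 1))) * (3 * (a - 1) * L - a * H)) by (field; repeat split; lra).
  assert (0 <= 2 * H / (PI * a * (a - 1))).
  { apply Rmult_le_pos; [lra|]. left; apply Rinv_0_lt_compat.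
    apply Rmult_lt_0_compat; [apply Rmult_lt_0_compat|]; lra. }
  nra.
Qed.
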